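(* Let $V$ be an $\mathrm{FI}_G$-module which is presented in finite degree and generated in degree $\le d$. Then $$\mathrm{dreg}(V)+1\le\mathrm{dwidth}(V)\le\mathrm{dreg}(V)+\max\{hd_1(V),d\},$$ with the conventions $\pm\infty+c=\pm\infty$.
   Context: Fix a commutative ring $k$ and a group $G$. $\mathrm{FI}_G$ is the category with objects $[n]$ ($n\ge0$) and morphisms $[n]\to[m]$ the pairs $(f,g)$ with $f$ injective and $g:[n]\to G$ a map of sets; composition $(f,g)\circ(f',g')=(f\circ f',h)$, $h(x)=g'(x)\,g(f'(x))$. $G_n=\mathfrak S_n\wr G$. An $\mathrm{FI}_G$-module is a functor $V:\mathrm{FI}_G\to\mathrm{Mod}_k$, $V_n=V([n])$. $M(n)_m=k[\mathrm{Hom}_{\mathrm{FI}_G}([n],[m])]$; for a $k[G_n]$-module $W$, $M(W)_m=W\otimes_{k[G_n]}k[\mathrm{Hom}_{\mathrm{FI}_G}([n],[m])]$; direct sums of these are relatively projective. $\deg V=\sup\{n:V_n\ne0\}$ ($\sup\emptyset=-\infty$). $H_0(V)_n=V_n/V_{<n}$ ($V_{<n}$ = span of images of all $V(f,g)$, $(f,g):[m]\to[n]$, $m<n$), $H_i$ left derived functors, $hd_i(V)=\deg H_i(V)$. Generated in degree $\le m$: surjection $\bigoplus M(n_i)\to V$, $n_i\le m$; related in degree $\le r$: exact $0\to K\to M\to V\to 0$, $M$ relatively projective, $K$ generated in degree $\le r$; presented in finite degree: both finite. $\Sigma$ sends $[n]\mapsto[n+1]$ and $(f,g)\mapsto(f_+,g_+)$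 ($f_+$ extends $f$ by $n+1\mapsto m+1$, $g_+$ extends $g$ by $n+1\mapsto1_G$); $SV=V\circ\Sigma$; $\iota:V\to SV$ is $V(f^n,\mathbf1)$ in degree $n$ ($f^n$ standard inclusion, $\mathbf 1$ trivial). $DV=\mathrm{coker}(\iota)$, $D^a$ its $a$-th iterate, $H_i^{D^a}$ left derived functors. $\mathrm{dreg}(V)=\sup_{a\ge1}\deg H_1^{D^a}(V)$, $\mathrm{dwidth}(V)=\sup_{a\ge1}(\deg H_1^{D^a}(V)+a)$, both in $\mathbb Z\cup\{\pm\infty\}$. *)

(* Defs.v *)
Set Warnings "-notation-overridden -ambiguous-paths".
From HB Require Import structures.
From mathcomp Require Import all_boot all_order all_algebra.
From Stdlib Require Import ClassicalEpsilon.
Set Warnings "-notation-overridden -ambiguous-paths".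

Set Implicit Arguments.
Unset Strict Implicit.
Unset Printing Implicit Defensive.

Import GRing.Theory.

Record hom (G : groupType) (n m : nat) := Hom {
  hf : 'I_n -> 'I_m;
  hinj : injective hf;
  hg : 'I_n -> G }.
Arguments Hom {G n m}.

Section FIG.
Variable G : groupType.
Local Open Scope group_scope.

Definition hid (n : nat) : hom G n n := Hom id (@inj_id _) (fun _ => 1).

Definition hcomp n m l (phi : hom G m l) (psi : hom G n m) : hom G n l :=
  Hom (hf phi \o hf psi) (inj_comp (@hinj G m l phi) (@hinj G n m psi))
      (fun x => hg psi x * hg phi (hf psi x)).

Lemma widen_ord_injS n : injective (@widen_ord n n.+1 (leqnSn n)).
Proof. move=> x y H; apply: val_inj; exact: (congr1 val H). Qed.

Definition hincl (n : nat) : hom G n n.+1 :=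
  Hom (widen_ord (leqnSn n)) (@widen_ord_injS n) (fun _ => 1).

(* Sigma on morphisms: f_+ extends f by n+1 |-> m+1, g_+ by n+1 |-> 1 *)
Definition sig_f n m (f : 'I_n -> 'I_m) (x : 'I_n.+1) : 'I_m.+1 :=
  match unlift ord_max x with
  | Some j => lift ord_max (f j)
  | None => ord_max
  end.

Lemma sig_f_inj n m (f : 'I_n -> 'I_m) : injective f -> injective (sig_f f).
Proof.
move=> finj x y; rewrite /sig_f.
case: (unliftP ord_max x) => [i ->|->]; case: (unliftP ord_max y) => [j ->|->] //.
- by move/lift_inj/finj => ->.
- by move=> H; have := neq_lift ord_max (f i); rewrite H eqxx.
- by move=> H; have := neq_lift ord_max (f j); rewrite -H eqxx.
Qed.

Definition sig_g n (g : 'I_n -> G) (x : 'I_n.+1) : G :=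
  match unlift ord_max x with Some j => g j | None => 1 end.

Definition hsig n m (phi : hom G n m) : hom G n.+1 m.+1 :=
  Hom (sig_f (hf phi)) (sig_f_inj (@hinj G n m phi)) (sig_g (hg phi)).

End FIG.

Section Modules.
Variables (k : comPzRingType) (G : groupType).
Local Open Scope ring_scope.

Record preFI := PreFI {
  Vm : nat -> lmodType k;
  Vact : forall n m, hom G n m -> Vm n -> Vm m }.
Arguments Vact p {n m} _ _.

(* functor laws: k-linearity, identities, composition, and dependence
   only on the pair (f, g) of functions *)
Definition FImod (V : preFI) : Prop :=
  [/\ (forall n m (phi : hom G n m) (a : k) x y,
         Vact V phi (a *: x + y) = a *: Vact V phi x + Vact V phi y),
      (forall n (x : Vm V n), Vact V (hid G n) x = x),
      (forall n m l (phi : hom G m l) (psi : hom G n m) x,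
         Vact V (hcomp phi psi) x = Vact V phi (Vact V psi x))
    & (forall n m (phi psi : hom G n m),
         hf phi =1 hf psi -> hg phi =1 hg psi -> Vact V phi =1 Vact V psi)].

Definition morph (V W : preFI) (p : forall n, Vm V n -> Vm W n) : Prop :=
  (forall n (a : k) (x y : Vm V n), p n (a *: x + y) = a *: p n x + p n y) /\
  (forall n m (phi : hom G n m) x, p m (Vact V phi x) = Vact W phi (p n x)).

Definition epi (V W : preFI) (p : forall n, Vm V n -> Vm W n) : Prop :=
  morph p /\ forall n (y : Vm W n), exists x, p n x = y.

Definition projective (P : preFI) : Prop :=
  FImod P /\
  forall (U W : preFI) (p : forall n, Vm U n -> Vm W n)
         (f : forall n, Vm P n -> Vm W n),
    FImod U -> FImod W -> epi p -> morph f ->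
    exists g : forall n, Vm P n -> Vm U n,
      morph g /\ forall n x, p n (g n x) = f n x.

Inductive span (T : lmodType k) (S : T -> Prop) : T -> Prop :=
  | span_in x : S x -> span S x
  | span_0 : span S 0
  | span_add x y : span S x -> span S y -> span S (x + y)
  | span_scale (a : k) x : span S x -> span S (a *: x).

(* V is generated in degree <= d : V_n is spanned by the images of
   elements of degree <= d (i.e. a surjection from a sum of M(n_i),
   n_i <= d, exists). *)
Definition gen_le (V : preFI) (d : int) : Prop :=
  forall n (x : Vm V n),
    span (fun y => exists m (phi : hom G m n) (z : Vm V m),
                     (m%:Z <= d)%R /\ y = Vact V phi z) x.

Definition sub_gen_le (M : preFI) (K : forall n, Vm M n -> Prop) (r : nat) :=
  forall n (x : Vm M n), K n x ->
    span (fun y => exists m (phi : hom G m n) (z : Vm M m),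
                     (m <= r)%N /\ K m z /\ y = Vact M phi z) x.

(* k[G_n]-modules, G_n = S_n wr G = End_{FI_G}([n]) *)
Record Gnmod (n : nat) := GnMod {
  Wc : lmodType k;
  Wact : hom G n n -> Wc -> Wc }.
Arguments Wact {n} g _ _.

Definition Gnmod_law n (W : Gnmod n) : Prop :=
  [/\ (forall s (a : k) x y, Wact W s (a *: x + y) = a *: Wact W s x + Wact W s y),
      (forall x, Wact W (hid G n) x = x),
      (forall s t x, Wact W (hcomp s t) x = Wact W s (Wact W t x))
    & (forall s t, hf s =1 hf t -> hg s =1 hg t -> Wact W s =1 Wact W t)].

Definition equivar n (W : Gnmod n) (U : preFI) (f : Wc W -> Vm U n) : Prop :=
  (forall (a : k) x y, f (a *: x + y) = a *: f x + f y) /\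
  (forall s x, f (Wact W s x) = Vact U s (f x)).

(* M is relatively projective: M is (isomorphic to) a direct sum of
   induced modules M(W_i) = W_i (x)_{k[G_{n_i}]} k[Hom([n_i], -)],
   expressed through the universal property
   Hom(+_i M(W_i), U) = prod_i Hom_{k[G_{n_i}]}(W_i, U_{n_i}). *)
Definition relproj (M : preFI) : Prop :=
  FImod M /\
  exists (I : Type) (dg : I -> nat) (W : forall i, Gnmod (dg i))
         (eta : forall i, Wc (W i) -> Vm M (dg i)),
    (forall i, Gnmod_law (W i)) /\ (forall i, equivar (eta i)) /\
    forall (U : preFI) (phi : forall i, Wc (W i) -> Vm U (dg i)),
      FImod U -> (forall i, equivar (phi i)) ->
      exists psi : forall n, Vm M n -> Vm U n,
        [/\ morph psi,
            (forall i w, psi (dg i) (eta i w) = phi i w)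
          & (forall psi' : forall n, Vm M n -> Vm U n, morph psi' ->
               (forall i w, psi' (dg i) (eta i w) = phi i w) ->
               forall n x, psi' n x = psi n x)].

Definition related_le (V : preFI) (r : nat) : Prop :=
  exists (M : preFI) (p : forall n, Vm M n -> Vm V n),
    relproj M /\ epi p /\ sub_gen_le (fun n x => p n x = 0) r.

Definition presented_fin (V : preFI) : Prop :=
  (exists d : nat, gen_le V d%:Z) /\ (exists r : nat, related_le V r).

Definition shift (V : preFI) : preFI :=
  {| Vm := fun n => Vm V n.+1; Vact := fun n m phi => Vact V (hsig phi) |}.

Definition iota (V : preFI) n : Vm V n -> Vm (shift V) n :=
  @Vact V n n.+1 (hincl G n).

Fixpoint Siter (a : nat) (V : preFI) : preFI :=
  match a with 0 => V | a'.+1 => shift (Siter a' V) end.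

(* a subquotient B/A of (the ambient module) V, given by predicates *)
Record subq (V : preFI) := SubQ {
  num : forall n, Vm V n -> Prop;
  den : forall n, Vm V n -> Prop }.
Arguments num {V} s n _.
Arguments den {V} s n _.

(* D(B/A) = coker(iota : B/A -> S(B/A)) = SB / (SA + iota(B)) *)
Definition Dq (V : preFI) (Q : subq V) : subq (shift V) :=
  {| num := fun n (x : Vm (shift V) n) => num Q n.+1 x;
     den := fun n (x : Vm (shift V) n) =>
       exists y z, den Q n.+1 y /\ num Q n z /\ x = y + iota z |}.

Fixpoint Diter (V : preFI) (a : nat) (Q : subq V) : subq (Siter a V) :=
  match a as a0 return subq (Siter a0 V) with
  | 0 => Q
  | a'.+1 => Dq (Diter a' Q)
  end.

(* H_0(B/A)_n = B_n / (A_n + span of images of B_m, m < n) *)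
Definition H0q (V : preFI) (Q : subq V) : subq V :=
  {| num := num Q;
     den := fun n => span (fun y => den Q n y \/
          exists m (phi : hom G m n) z, (m < n)%N /\ num Q m z /\ y = Vact V phi z) |}.

(* kernel of the map B1/A1 -> B2/A2 induced by B1 <= B2, A1 <= A2 *)
Definition kerq (V : preFI) (Q1 Q2 : subq V) : subq V :=
  {| num := fun n x => num Q1 n x /\ den Q2 n x; den := den Q1 |}.

Inductive eint := ENInf | EFin of int | EPInf.

Definition ele (x y : eint) : Prop :=
  match x, y with
  | ENInf, _ => True
  | _, EPInf => True
  | EFin a, EFin b => (a <= b)%R
  | _, _ => False
  end.

Definition eaddc (x : eint) (c : int) : eint :=
  match x with EFin a => EFin (a + c) | e => e end.

Definition eadd (x y : eint) : eint :=
  match x, y with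
  | EFin a, EFin b => EFin (a + b)
  | EPInf, _ | _, EPInf => EPInf
  | _, _ => ENInf
  end.

Definition emax (x y : eint) : eint :=
  match x, y with
  | ENInf, e | e, ENInf => e
  | EPInf, _ | _, EPInf => EPInf
  | EFin a, EFin b => EFin (Num.max a b)
  end.

Definition is_lub (S : eint -> Prop) (e : eint) : Prop :=
  (forall x, S x -> ele x e) /\ (forall u, (forall x, S x -> ele x u) -> ele e u).

(* supremum in Z u {+-oo} (sup of the empty set is -oo) *)
Definition esup (S : eint -> Prop) : eint :=
  epsilon (inhabits ENInf) (is_lub S).

Definition deg (V : preFI) (Q : subq V) : eint :=
  esup (fun e => exists n (x : Vm V n), e = EFin n%:Z /\ num Q n x /\ ~ den Q n x).

(* For a surjection pi : P -> V with P projective and K = ker pi,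
   H_1^{D^a}(V) = ker(D^a K -> D^a P), H_1(V) = ker(H_0 K -> H_0 P). *)
Section Presentation.
Variables (P V : preFI) (pi : forall n, Vm P n -> Vm V n).

Definition kerQ : subq P := {| num := fun n (x : Vm P n) => @pi n x = 0; den := fun n (x : Vm P n) => x = 0 |}.
Definition allQ : subq P := {| num := fun n (x : Vm P n) => True; den := fun n (x : Vm P n) => x = 0 |}.

Definition H1D (a : nat) : subq (Siter a P) := kerq (Diter a kerQ) (Diter a allQ).
Definition H1 : subq P := kerq (H0q kerQ) (H0q allQ).

Definition hd1 : eint := deg H1.

Definition dreg : eint :=
  esup (fun e => exists a : nat, (0 < a)%N /\ e = deg (H1D a)).

Definition dwidth : eint :=
  esup (fun e => exists a : nat, (0 < a)%N /\ e = eaddc (deg (H1D a)) a%:Z).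

End Presentation.
End Modules.

(* Main.v *)
From Pilot Require Import Defs.
From HB Require Import structures.
From mathcomp Require Import all_boot all_order all_algebra.
From mathcomp Require Import fingroup perm.
From mathcomp Require Import zify.
From Stdlib Require Import ClassicalEpsilon Classical.
Set Implicit Arguments. Unset Strict Implicit. Unset Printing Implicit Defensive.
Import Order.TTheory GRing.Theory Num.Theory.
Local Open Scope ring_scope.
Local Notation span := Pilot.Defs.span.
Local Notation num Q n x := (@Pilot.Defs.num _ _ _ Q n x).
Local Notation den Q n x := (@Pilot.Defs.den _ _ _ Q n x).
Local Notation iota := Pilot.Defs.iota.
Local Notation subq := Pilot.Defs.subq.
Local Notation hom := Pilot.Defs.hom.
Local Notation Vact W phi x := (@Pilot.Defs.Vact _ _ W _ _ phi x).

Section Span.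
Variable k : comPzRingType.

Definition lin (T1 T2 : lmodType k) (F : T1 -> T2) :=
  forall (a : k) x y, F (a *: x + y) = a *: F x + F y.

Lemma lin0 (T1 T2 : lmodType k) (F : T1 -> T2) : lin F -> F 0 = 0.
Proof.
move=> hF; have := hF 1 0 0; rewrite !scale1r addr0 => e.
by have := congr1 (fun z => z - F 0) e; rewrite addrK subrr => ->.
Qed.
Lemma linD (T1 T2 : lmodType k) (F : T1 -> T2) : lin F -> forall x y, F (x + y) = F x + F y.
Proof. by move=> hF x y; have := hF 1 x y; rewrite !scale1r. Qed.
Lemma linZ (T1 T2 : lmodType k) (F : T1 -> T2) : lin F -> forall a x, F (a *: x) = a *: F x.
Proof. by move=> hF a x; have := hF a x 0; rewrite !addr0 (lin0 hF) addr0. Qed.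
Lemma linB (T1 T2 : lmodType k) (F : T1 -> T2) : lin F -> forall x y, F (x - y) = F x - F y.
Proof.
move=> hF x y; rewrite -scaleN1r linD // linZ // scaleN1r //.
Qed.

Lemma span_lin (T1 T2 : lmodType k) (F : T1 -> T2) (S1 : T1 -> Prop) (S2 : T2 -> Prop) (x : T1) :
  lin F -> (forall y, S1 y -> span S2 (F y)) -> span S1 x -> span S2 (F x).
Proof.
move=> hF hS; elim=> [y /hS //| |y z _ Hy _ Hz|a y _ Hy].
- by rewrite (lin0 hF); exact: span_0.
- by rewrite (linD hF); exact: span_add.
- by rewrite (linZ hF); exact: span_scale.
Qed.

Lemma span_trans (T : lmodType k) (S1 S2 : T -> Prop) (x : T) :
  (forall y, S1 y -> span S2 y) -> span S1 x -> span S2 x.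
Proof. by move=> h; apply: (@span_lin _ _ id) => // a u v. Qed.

Lemma span_mono (T : lmodType k) (S1 S2 : T -> Prop) (x : T) :
  (forall y, S1 y -> S2 y) -> span S1 x -> span S2 x.
Proof. by move=> h; apply: span_trans => y /h; exact: span_in. Qed.

Definition subsp (T : lmodType k) (C : T -> Prop) :=
  C 0 /\ forall a x y, C x -> C y -> C (a *: x + y).

Lemma subspD (T : lmodType k) (C : T -> Prop) : subsp C -> forall x y, C x -> C y -> C (x + y).
Proof. by case=> _ h x y hx hy; have := h 1 x y hx hy; rewrite scale1r. Qed.
Lemma subspZ (T : lmodType k) (C : T -> Prop) : subsp C -> forall a x, C x -> C (a *: x).
Proof. by case=> h0 h a x hx; have := h a x 0 hx h0; rewrite addr0. Qed.

Lemma span_subsp (T : lmodType k) (S C : T -> Prop) (x : T) :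
  subsp C -> (forall y, S y -> C y) -> span S x -> C x.
Proof.
move=> hC hS; elim=> [y /hS //| |y z _ Hy _ Hz|a y _ Hy].
- by case: hC.
- exact: subspD.
- exact: subspZ.
Qed.

Lemma subsp_span (T : lmodType k) (S : T -> Prop) : subsp (span S).
Proof.
split; first exact: span_0.
by move=> a x y hx hy; apply: span_add => //; exact: span_scale.
Qed.
End Span.

Definition asb (P : Prop) : bool := if excluded_middle_informative P then true else false.
Lemma asbP (P : Prop) : asb P <-> P.
Proof. rewrite /asb; case: excluded_middle_informative => //. Qed.

Lemma ele_refl x : ele x x.
Proof. by case: x => //= a. Qed.

Lemma ele_trans x y z : ele x y -> ele y z -> ele x z.
Proof.
case: x => [|a|]; case: y => [|b|]; case: z => [|c|] //=.
by move=> h1 h2; lia.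
Qed.

Lemma lub_exists (S : eint -> Prop) : exists e, is_lub S e.
Proof.
case: (classic (S EPInf)) => hP.
  by exists EPInf; split => [x _|u hu]; [case: x|exact: hu].
case: (classic (exists z, S (EFin z))) => [[z0 hz0]|hno]; last first.
  exists ENInf; split => [x hx|u _] //.
  case: x hx => [//|z hz|//]; by case: hno; exists z.
case: (classic (exists b, forall z, S (EFin z) -> z <= b)) => [[b hb]|hub]; last first.
  exists EPInf; split => [x _|u hu]; first by case: x.
  case: u hu => [hu|c hu|//]; first by have := hu _ hz0.
  by case: hub; exists c => z /hu.
pose p := fun t : nat => asb (S (EFin (b - t%:Z))).
have ex : exists t, p t.
  exists `|b - z0|%N; apply/asbP.
  have hb0 := hb _ hz0.
  by have -> : b - (`|b - z0|%N)%:Z = z0 by lia.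
case: (ex_minnP ex) => t /asbP ht hmin.
exists (EFin (b - t%:Z)); split => [x hx|u hu]; last exact: hu.
case: x hx => [//|z hz|//] /=.
have hbz := hb _ hz.
have : (t <= `|b - z|%N)%N.
  apply: hmin; apply/asbP.
  by have -> : b - (`|b - z|%N)%:Z = z by lia.
lia.
Qed.

Lemma esup_lub (S : eint -> Prop) : is_lub S (esup S).
Proof. rewrite /esup; apply: epsilon_spec; exact: lub_exists. Qed.

Section Deg.
Variables (k : comPzRingType) (G : groupType).

Lemma deg_witness (V : preFI k G) (Q : subq V) n (x : Vm V n) :
  num Q n x -> ~ den Q n x -> ele (EFin n%:Z) (deg Q).
Proof.
move=> h1 h2; case: (esup_lub (fun e => exists n (x : Vm V n),
   e = EFin n%:Z /\ num Q n x /\ ~ den Q n x)) => hu _.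
by apply: hu; exists n, x.
Qed.

Lemma deg_empty (V : preFI k G) (Q : subq V) :
  (forall n (x : Vm V n), num Q n x -> den Q n x) -> deg Q = ENInf.
Proof.
move=> h; case: (esup_lub (fun e => exists n (x : Vm V n),
   e = EFin n%:Z /\ num Q n x /\ ~ den Q n x)) => _ hl.
have : ele (deg Q) ENInf.
  by apply: hl => e [n [x [_ [h1 h2]]]]; case: h2; apply: h.
by rewrite /deg; case: (esup _).
Qed.

Lemma deg_small (V : preFI k G) (Q : subq V) n (x : Vm V n) :
  ~ ele (EFin n%:Z) (deg Q) -> num Q n x -> den Q n x.
Proof.
move=> hn h1; apply: NNPP => h2; apply: hn; exact: deg_witness h1 h2.
Qed.
End Deg.


Section SubL.
Variables (k : comPzRingType) (T : lmodType k) (Pr : T -> Prop).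
Hypothesis P0 : Pr 0.
Hypothesis PD : forall (a : k) x y, Pr x -> Pr y -> Pr (a *: x + y).

Definition subl := {x : T | asb (Pr x)}.
HB.instance Definition _ := Choice.on subl.

Lemma PD' x y : Pr x -> Pr y -> Pr (x + y).
Proof. by move=> hx hy; have := PD 1 hx hy; rewrite scale1r. Qed.
Lemma PZ a x : Pr x -> Pr (a *: x).
Proof. by move=> hx; have := PD a hx P0; rewrite addr0. Qed.

Definition sl0 : subl := exist _ 0 (proj2 (asbP _) P0).
Definition sladd (x y : subl) : subl :=
  exist _ (val x + val y) (proj2 (asbP _) (PD' (proj1 (asbP _) (valP x)) (proj1 (asbP _) (valP y)))).
Definition slscale (a : k) (x : subl) : subl :=
  exist _ (a *: val x) (proj2 (asbP _) (PZ a (proj1 (asbP _) (valP x)))).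
Definition slopp (x : subl) : subl := slscale (-1) x.

Lemma sl_addA : associative sladd.
Proof. by move=> x y z; apply: val_inj; rewrite /= addrA. Qed.
Lemma sl_addC : commutative sladd.
Proof. by move=> x y; apply: val_inj; rewrite /= addrC. Qed.
Lemma sl_add0 : left_id sl0 sladd.
Proof. by move=> x; apply: val_inj; rewrite /= add0r. Qed.
Lemma sl_addN : left_inverse sl0 slopp sladd.
Proof. by move=> x; apply: val_inj; rewrite /= scaleN1r addNr. Qed.
HB.instance Definition _ := GRing.isZmodule.Build subl sl_addA sl_addC sl_add0 sl_addN.
Lemma sl_scaleA a b v : slscale a (slscale b v) = slscale (a * b) v.
Proof. by apply: val_inj; rewrite /= scalerA. Qed.
Lemma sl_scale1 : left_id 1 slscale.
Proof. by move=> x; apply: val_inj; rewrite /= scale1r. Qed.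
Lemma sl_scaleDr : right_distributive slscale +%R.
Proof. by move=> a x y; apply: val_inj; rewrite /= scalerDr. Qed.
Lemma sl_scaleDl v : {morph slscale^~ v: a b / a + b}.
Proof. by move=> a b; apply: val_inj; rewrite /= scalerDl. Qed.
HB.instance Definition _ := GRing.Zmodule_isLmodule.Build k subl sl_scaleA sl_scale1 sl_scaleDr sl_scaleDl.

Definition sublT : lmodType k := subl.
Lemma sval_add (x y : sublT) : val (x + y) = val x + val y. Proof. by []. Qed.
Lemma sval_scale a (x : sublT) : val (a *: x) = a *: val x. Proof. by []. Qed.
Lemma sval_zero : val (0 : sublT) = 0. Proof. by []. Qed.
End SubL.

Section Shift.
Variables (k : comPzRingType) (G : groupType).

Lemma sig_f_lift n m (f : 'I_n -> 'I_m) (j : 'I_n) :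
  sig_f f (lift ord_max j) = lift ord_max (f j).
Proof. by rewrite /sig_f liftK. Qed.
Lemma sig_f_max n m (f : 'I_n -> 'I_m) : sig_f f ord_max = ord_max.
Proof. by rewrite /sig_f unlift_none. Qed.
Lemma sig_g_lift n (g : 'I_n -> G) (j : 'I_n) : sig_g g (lift ord_max j) = g j.
Proof. by rewrite /sig_g liftK. Qed.
Lemma sig_g_max n (g : 'I_n -> G) : sig_g g ord_max = 1%g.
Proof. by rewrite /sig_g unlift_none. Qed.

Lemma FImod_shift (V : preFI k G) : FImod V -> FImod (shift V).
Proof.
case=> hl hid hc he; split.
- by move=> n m phi a x y; apply: hl.
- move=> n x /=; rewrite -[RHS](hid n.+1 x); apply: he => y;
  by case: (unliftP ord_max y) => [j ->|->];
     rewrite /= ?sig_f_lift ?sig_f_max ?sig_g_lift ?sig_g_max.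
- move=> n m l phi psi x /=; rewrite -hc; apply: he => y;
  case: (unliftP ord_max y) => [j ->|->];
  by rewrite /= ?sig_f_lift ?sig_f_max ?sig_g_lift ?sig_g_max ?mulg1.
- move=> n m phi psi ef eg x /=; apply: he => y;
  case: (unliftP ord_max y) => [j ->|->];
  by rewrite /= ?sig_f_lift ?sig_f_max ?sig_g_lift ?sig_g_max ?ef ?eg.
Qed.

Lemma FImod_Siter (V : preFI k G) a : FImod V -> FImod (Siter a V).
Proof. by move=> hV; elim: a => //= a IH; exact: FImod_shift. Qed.

Fixpoint hS (U1 U2 : preFI k G) (h : forall n, Vm U1 n -> Vm U2 n) (a : nat) :
  forall n, Vm (Siter a U1) n -> Vm (Siter a U2) n :=
  match a as a0 return forall n, Vm (Siter a0 U1) n -> Vm (Siter a0 U2) n with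
  | 0 => h
  | a'.+1 => fun n => @hS U1 U2 h a' n.+1
  end.
Arguments hS {U1 U2} h a n _.

Lemma morph_hS (U1 U2 : preFI k G) (h : forall n, Vm U1 n -> Vm U2 n) a :
  morph h -> morph (hS h a).
Proof.
move=> hm; elim: a => //= a [IH1 IH2]; split.
- by move=> n; apply: IH1.
- by move=> n m phi x; apply: IH2.
Qed.

Definition closedQ (W : preFI k G) (Q : subq W) : Prop :=
  [/\ forall n, num Q n 0,
      forall n (a : k) x y, num Q n x -> num Q n y -> num Q n (a *: x + y),
      forall n m (phi : hom G n m) x, num Q n x -> num Q m (Vact W phi x),
      forall n, den Q n 0
    & forall n (a : k) x y, den Q n x -> den Q n y -> den Q n (a *: x + y)].

Lemma lin_Vact (W : preFI k G) n m (phi : hom G n m) : FImod W -> lin (fun x => Vact W phi x).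
Proof. by case=> hl _ _ _ a x y; apply: hl. Qed.

Lemma closedQ_Dq (W : preFI k G) (Q : subq W) : FImod W -> closedQ Q -> closedQ (Dq Q).
Proof.
move=> hW [n0 nD nV d0 dD]; split => //=.
- by move=> n a x y; apply: nD.
- by move=> n m phi x hx; exact: (nV _ _ (hsig phi) x hx).
- move=> n; exists 0, 0; split; first exact: d0.
  by split; [exact: n0| rewrite /iota (lin0 (lin_Vact _ hW)) addr0].
- move=> n a x y [y1 [z1 [h1 [h2 ->]]]] [y2 [z2 [h3 [h4 ->]]]].
  exists (a *: y1 + y2), (a *: z1 + z2); split; first exact: dD.
  split; first exact: nD.
  rewrite /iota (lin_Vact _ hW) scalerDr.
  by rewrite -!addrA; congr (_ + _); rewrite addrCA.
Qed.

Lemma closedQ_Diter (W : preFI k G) (Q : subq W) a :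
  FImod W -> closedQ Q -> closedQ (Diter a Q).
Proof.
move=> hW hQ; elim: a => //= a IH; apply: closedQ_Dq => //; exact: FImod_Siter.
Qed.

Definition mapsQ (U1 U2 : preFI k G) (h : forall n, Vm U1 n -> Vm U2 n)
  (Q1 : subq U1) (Q2 : subq U2) : Prop :=
  (forall n x, num Q1 n x -> num Q2 n (h n x)) /\
  (forall n x, den Q1 n x -> den Q2 n (h n x)).

Lemma mapsQ_Dq (U1 U2 : preFI k G) (h : forall n, Vm U1 n -> Vm U2 n) Q1 Q2 :
  morph h -> mapsQ h Q1 Q2 -> mapsQ (hS h 1) (Dq Q1) (Dq Q2).
Proof.
move=> [hl hn] [mn md]; split => /=.
- by move=> n x; apply: mn.
- move=> n x [y [z [h1 [h2 ->]]]]; exists (h n.+1 y), (h n z).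
  split; first exact: md. split; first exact: mn.
  have hl' : lin (h n.+1) by move=> a u v; apply: hl.
  by rewrite (linD hl') /iota hn.
Qed.

Lemma mapsQ_Diter (U1 U2 : preFI k G) (h : forall n, Vm U1 n -> Vm U2 n) Q1 Q2 a :
  morph h -> mapsQ h Q1 Q2 -> mapsQ (hS h a) (Diter a Q1) (Diter a Q2).
Proof.
move=> hm hQ; elim: a => //= a IH.
exact: (mapsQ_Dq (morph_hS a hm) IH).
Qed.

End Shift.

Lemma down_lt n (x : 'I_n.+1) : x != ord_max -> (x < n)%N.
Proof.
move=> H; have := ltn_ord x; rewrite ltnS leq_eqVlt => /orP [e|//].
by case/eqP: H; apply: val_inj; exact/eqP.
Qed.
Definition down n (x : 'I_n.+1) (H : x != ord_max) : 'I_n := Ordinal (down_lt H).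
Lemma lift_down n (x : 'I_n.+1) (H : x != ord_max) : lift ord_max (down H) = x.
Proof. by apply: val_inj; rewrite /= /bump leqNgt (down_lt H). Qed.
Lemma widen_down n (x : 'I_n.+1) (H : x != ord_max) : widen_ord (leqnSn n) (down H) = x.
Proof. by apply: val_inj. Qed.

Section OneStep.
Variables (k : comPzRingType) (G : groupType).

Definition Gen (W : preFI k G) (K : forall n, Vm W n -> Prop) (e : nat) n (y : Vm W n) :=
  exists m (phi : hom G m n) z, (m < e)%N /\ K m z /\ y = Vact W phi z.
Arguments Gen : clear implicits.

Lemma FI_ext (W : preFI k G) n m (phi psi : hom G n m) x : FImod W ->
  hf phi =1 hf psi -> hg phi =1 hg psi -> Vact W phi x = Vact W psi x.
Proof. by case=> _ _ _ he ef eg; apply: he. Qed.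
Lemma FI_comp (W : preFI k G) n m l (phi : hom G m l) (psi : hom G n m) x : FImod W ->
  Vact W (hcomp phi psi) x = Vact W phi (Vact W psi x).
Proof. by case=> _ _ hc _; apply: hc. Qed.
Lemma FI_id (W : preFI k G) n x : FImod W -> Vact W (hid G n) x = x.
Proof. by case=> _ hi _ _; apply: hi. Qed.

Lemma one_step (W : preFI k G) (Q : subq W) (e : nat) : FImod W -> closedQ Q ->
  forall n m (phi : hom G m n.+1) z, (m < e)%N -> num Q m z ->
  den (Dq Q) n (Vact W phi z) \/
  Gen (shift W) (fun m x => num (Dq Q) m x) e.-1 n (Vact W phi z).
Proof.
move=> hW [n0 nD nV d0 dD] n m phi z hme hz.
case: (boolP [exists j, hf phi j == ord_max]) => [/existsP [j /eqP hj]|hno].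
- right; revert phi z hme hz j hj; case: m => [|m] phi z hme hz j hj; first by have := ltn_ord j.
  pose t := tperm j (@ord_max m).
  have hne : forall i, hf phi (t (lift ord_max i)) != ord_max.
    move=> i; apply/eqP; rewrite -hj => /(@hinj _ _ _ phi) e1.
    have : lift ord_max i = t j by rewrite -e1 tpermK.
    by rewrite tpermL => /eqP; rewrite eq_sym (negbTE (neq_lift _ _)).
  have psi_inj : injective (fun i => down (hne i)).
    move=> i i' /(congr1 val) /= ee; apply: (@lift_inj _ ord_max); apply: (@perm_inj _ t).
    apply: (@hinj _ _ _ phi); exact: val_inj.
  pose psi : hom G m n := Pilot.Defs.Hom (fun i => down (hne i)) psi_inj (fun _ => 1%g).
  pose sg : hom G m.+1 m.+1 := Pilot.Defs.Hom t (@perm_inj _ t) (hg phi).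
  exists m, psi, (Vact W sg z); split; first by move: hme; case: (e).
  split; first exact: nV.
  rewrite /= -(FI_comp _ _ _ hW); apply: FI_ext => // x /=.
  + case: (unliftP ord_max (t x)) => [i ei|ei].
    * rewrite ei sig_f_lift lift_down -ei tpermK //.
    * rewrite ei sig_f_max; move/(congr1 t): ei; rewrite tpermK tpermR => ->.
      by rewrite hj.
  + case: (unliftP ord_max (t x)) => [i ->|->];
    by rewrite ?sig_g_lift ?sig_g_max mulg1.
- left.
  have hne : forall i, hf phi i != ord_max.
    move=> i; apply/negP => /eqP e1; move/negP: hno; apply.
    by apply/existsP; exists i; rewrite e1.
  have psi_inj : injective (fun i => down (hne i)).
    move=> i i' /(congr1 val) /= ee; apply: (@hinj _ _ _ phi); exact: val_inj.
  pose psi : hom G m n := Pilot.Defs.Hom (fun i => down (hne i)) psi_inj (hg phi).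
  exists 0, (Vact W psi z); split; first exact: d0.
  split; first exact: nV.
  rewrite add0r /iota -(FI_comp _ _ _ hW); apply: (FI_ext _ hW) => // x /=.
  + by rewrite widen_down.
  + by rewrite mulg1.
Qed.

Lemma invariant (W : preFI k G) (Q : subq W) (e : nat) : FImod W -> closedQ Q ->
  (forall n x, num Q n x -> span (Gen W (fun m y => num Q m y) e n) x) ->
  forall b n (x : Vm (Siter b W) n), num (Diter b Q) n x ->
  span (fun y => den (Diter b Q) n y \/
                 Gen (Siter b W) (fun m y => num (Diter b Q) m y) (e - b) n y) x.
Proof.
move=> hW hQ h0; elim=> [|b IH] n x hx.
- by rewrite subn0; apply: span_mono (h0 _ _ hx) => y hy; right.
- have := IH n.+1 x hx; apply: span_mono => y [hy|[m [phi [z [hm [hz ->]]]]]].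
  + left; exists y, 0; split => //; split.
      by case: (closedQ_Diter b hW hQ).
    rewrite /iota (lin0 (lin_Vact _ (FImod_Siter b hW))) addr0 //.
  + have := one_step (FImod_Siter b hW) (closedQ_Diter b hW hQ) phi hm hz.
    by rewrite subnS; case=> h; [left|right].
Qed.

Lemma vanish_gen (W : preFI k G) (Q : subq W) (e : nat) : FImod W -> closedQ Q ->
  (forall n x, num Q n x -> span (Gen W (fun m y => num Q m y) e n) x) ->
  forall b n (x : Vm (Siter b W) n), (e <= b)%N -> num (Diter b Q) n x ->
  den (Diter b Q) n x.
Proof.
move=> hW hQ h0 b n x heb hx.
have := invariant hW hQ h0 hx.
have [_ _ _ d0 dD] := closedQ_Diter b hW hQ.
apply: span_subsp; first by split; [apply: d0|apply: dD].
move=> y [//|[m [phi [z [hm _]]]]].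
by move: hm; rewrite (eqP heb).
Qed.

End OneStep.
Arguments Gen {k G W} K e n y.

Section Main.
Unset Implicit Arguments.
Variables (k : comPzRingType) (G : groupType) (V P : preFI k G)
  (pi : forall n, Vm P n -> Vm V n) (d : int).
Hypotheses (hV : FImod V) (hP : projective P) (hpi : epi pi) (hgen : gen_le V d).

Lemma hPm : FImod P. Proof. by case: hP. Qed.

Definition genP n (x : Vm P n) : Prop :=
  span (fun y => exists m (phi : hom G m n) (z : Vm P m), (m%:Z <= d)%R /\ y = Vact P phi z) x.
Lemma genP0 n : genP n 0. Proof. exact: span_0. Qed.
Lemma genPD n a (x y : Vm P n) : genP n x -> genP n y -> genP n (a *: x + y).
Proof. by move=> hx hy; apply: span_add => //; apply: span_scale. Qed.
Definition Pc n : lmodType k := sublT (genP0 n) (genPD n).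

Lemma genP_Vact n m (phi : hom G n m) (x : Vm P n) : genP n x -> genP m (Vact P phi x).
Proof.
apply: (@span_lin _ _ _ (fun x => Vact P phi x)); first exact: lin_Vact hPm.
move=> y [m0 [psi [z [hm ->]]]]; apply: span_in; exists m0, (hcomp phi psi), z.
by split => //; rewrite (FI_comp _ _ _ hPm).
Qed.

Definition Pact n m (phi : hom G n m) (x : Pc n) : Pc m :=
  exist _ (Vact P phi (val x)) (proj2 (asbP _) (genP_Vact n m phi _ (proj1 (asbP _) (valP x)))).
Definition Pp : preFI k G := @PreFI k G Pc Pact.

Lemma val_Pact n m (phi : hom G n m) (x : Vm Pp n) : val (Vact Pp phi x) = Vact P phi (val x).
Proof. by []. Qed.
Lemma val_add n (x y : Vm Pp n) : val (x + y) = val x + val y. Proof. by []. Qed.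
Lemma val_scale n a (x : Vm Pp n) : val (a *: x) = a *: val x. Proof. by []. Qed.
Lemma val_0 n : val (0 : Vm Pp n) = 0. Proof. by []. Qed.
Lemma val_sub n (x y : Vm Pp n) : val (x - y) = val x - val y.
Proof. by rewrite -scaleN1r val_add val_scale scaleN1r. Qed.

Lemma FImod_Pp : FImod Pp.
Proof.
case: hPm => hl hi hc he; split.
- move=> n m phi a x y; apply: val_inj; by rewrite /= hl.
- by move=> n x; apply: val_inj; rewrite /= hi.
- by move=> n m l phi psi x; apply: val_inj; rewrite /= hc.
- by move=> n m phi psi ef eg x; apply: val_inj; rewrite /= (he _ _ _ _ ef eg).
Qed.

Definition gv n (x : Vm Pp n) : Vm P n := val x.
Lemma morph_gv : morph gv.
Proof. by split. Qed.

Lemma lin_pi (n : nat) : lin (pi n). Proof. by case: hpi => [[hl _] _] a x y; apply: hl. Qed.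
Lemma nat_pi n m (phi : hom G n m) x : pi m (Vact P phi x) = Vact V phi (pi n x).
Proof. by case: hpi => [[_ hn] _]; apply: hn. Qed.

Definition pp n (x : Vm Pp n) : Vm V n := pi n (val x).

Lemma epi_pp : epi pp.
Proof.
split.
  split => [n a x y|n m phi x]; first by rewrite /pp val_add val_scale (lin_pi n).
  by rewrite /pp val_Pact nat_pi.
move=> n y.
suff : forall y', span (fun y => exists m (phi : hom G m n) (z : Vm V m),
                     (m%:Z <= d)%R /\ y = Vact V phi z) y' -> exists x, pp n x = y'.
  by apply; apply: hgen.
move=> y'; elim => [u [m [phi [z [hm ->]]]]| |u v _ [x1 <-] _ [x2 <-]|a u _ [x1 <-]].
- case: hpi => _ /(_ m z) [z' hz'].
  have gz' : genP m z'.
    apply: span_in; exists m, (hid G m), z'; split => //; by rewrite FI_id //; exact: hPm.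
  exists (Vact Pp phi (exist _ z' (proj2 (asbP _) gz') : Vm Pp m)).
  by rewrite /pp val_Pact nat_pi /= hz'.
- by exists 0; rewrite /pp val_0 (lin0 (lin_pi n)).
- by exists (x1 + x2); rewrite /pp val_add (linD (lin_pi n)).
- by exists (a *: x1); rewrite /pp val_scale (linZ (lin_pi n)).
Qed.

Lemma lift_f : exists f : forall n, Vm P n -> Vm Pp n,
  morph f /\ forall n x, pp n (f n x) = pi n x.
Proof.
case: hP => _ hl; apply: hl => //; [exact: FImod_Pp|exact: epi_pp|by case: hpi].
Qed.


Lemma genPp n (x : Vm Pp n) :
  span (fun w => exists m' (phi : hom G m' n) (z : Vm Pp m'), (m'%:Z <= d)%R /\ w = Vact Pp phi z) x.
Proof.
have := proj1 (asbP _) (valP x); move: x.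
suff : forall y, genP n y -> forall x : Vm Pp n, val x = y ->
  span (fun w => exists m' (phi : hom G m' n) (z : Vm Pp m'), (m'%:Z <= d)%R /\ w = Vact Pp phi z) x.
  by move=> h x hx; apply: (h _ hx).
move=> y; elim => [u [m' [phi [z [hm ->]]]]| |u v hu IHu hv IHv|c u hu IHu] x hx.
- have gz : genP m' z.
    apply: span_in; exists m', (hid G m'), z; split => //; by rewrite FI_id //; exact: hPm.
  pose z' : Vm Pp m' := exist _ z (proj2 (asbP _) gz).
  have -> : x = Vact Pp phi z' by apply: val_inj; rewrite hx.
  by apply: span_in; exists m', phi, z'.
- have -> : x = 0 by apply: val_inj; rewrite hx.
  exact: span_0.
- pose x1 : Vm Pp n := exist _ u (proj2 (asbP _) hu).
  pose x2 : Vm Pp n := exist _ v (proj2 (asbP _) hv).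
  have -> : x = x1 + x2 by apply: val_inj; rewrite hx.
  by apply: span_add; [apply: IHu|apply: IHv].
- pose x1 : Vm Pp n := exist _ u (proj2 (asbP _) hu).
  have -> : x = c *: x1 by apply: val_inj; rewrite hx.
  by apply: span_scale; apply: IHu.
Qed.

Section WithF.
Variables (f : forall n, Vm P n -> Vm Pp n).
Hypotheses (hfm : morph f) (hfp : forall n x, pp n (f n x) = pi n x).

Lemma lin_f n : lin (f n). Proof. by case: hfm => hl _ a x y; apply: hl. Qed.
Lemma nat_f n m (phi : hom G n m) x : f m (Vact P phi x) = Vact Pp phi (f n x).
Proof. by case: hfm => _ hn; apply: hn. Qed.

Variables (a : nat).
Hypotheses (ha1 : forall m, (a <= m)%N -> (d < m%:Z)%R)
  (ha2 : forall m (y : Vm P m), (a <= m)%N -> num (H1 pi) m y -> den (H1 pi) m y).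

Lemma Kgen m (y : Vm Pp m) : pp m y = 0 ->
  span (Gen (fun m (z : Vm Pp m) => pp m z = 0) a m) y.
Proof.
elim/ltn_ind: m y => m IH y hy.
case: (ltnP m a) => hma.
  apply: span_in; exists m, (hid G m), y; split => //; split => //.
  by rewrite FI_id //; exact: FImod_Pp.
have vact : forall m' (phi : hom G m' m) (z : Vm Pp m'), (m' < m)%N -> pp m' z = 0 ->
    span (Gen (fun m (z : Vm Pp m) => pp m z = 0) a m) (Vact Pp phi z).
  move=> m' phi z hm' hz; have := IH m' hm' z hz.
  apply: (span_lin (F := fun x => Vact Pp phi x)); first exact: lin_Vact FImod_Pp.
  move=> w [m0 [psi [z0 [h0 [h1 ->]]]]]; apply: span_in; exists m0, (hcomp phi psi), z0.
  by split => //; split => //; rewrite (FI_comp _ _ _ FImod_Pp).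
have -> : y = f m (val y) + (y - f m (val y)) by rewrite addrC subrK.
apply: span_add.
- have hden : den (H1 pi) m (val y).
    apply: ha2 => //; split; first exact: hy.
    apply: span_mono (proj1 (asbP _) (valP y)) => w [m' [phi [z [hm' ->]]]].
    right; exists m', phi, z; split => //.
    have := ha1 m hma; lia.
  apply: (span_lin (F := f m)) hden; first exact: lin_f.
  move=> w [->|[m' [phi [z [hm' [hz ->]]]]]].
    by rewrite (lin0 (lin_f m)); exact: span_0.
  by rewrite nat_f; apply: vact => //; rewrite hfp.
- apply: (span_lin (F := fun y : Vm Pp m => y - f m (val y))) (genPp m y).
    move=> c u v /=; rewrite (lin_f m).
    rewrite scalerBr; rewrite -!addrA; congr (_ + _).
    by rewrite opprD addrCA.
  move=> w [m' [phi [z [hm' ->]]]].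
  rewrite val_Pact nat_f -(linB (lin_Vact phi FImod_Pp)).
  apply: vact.
    by have := ha1 m hma; lia.
  by rewrite /pp val_sub (linB (lin_pi m')) -/(pp m' (f m' (val z))) hfp subrr.
Qed.


Definition hh0 n (y : Vm P n) : Vm P n := y - gv n (f n y).
Lemma morph_hh0 : morph hh0.
Proof.
split => [n c x y|n m phi x]; rewrite /hh0 /gv.
  rewrite (lin_f n) val_add val_scale scalerBr -!addrA; congr (_ + _).
  by rewrite opprD addrCA.
by rewrite nat_f val_Pact -(linB (lin_Vact phi hPm)).
Qed.

Lemma hS_decomp b n (x : Vm (Siter b P) n) : hS hh0 x = x - hS gv (hS f x).
Proof. by elim: b n x => [//|b IH] n x /=; apply: IH. Qed.

Lemma closed_kerP : closedQ (kerQ pi).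
Proof.
split => /=.
- by move=> n; rewrite (lin0 (lin_pi n)).
- by move=> n c x y hx hy; rewrite (lin_pi n) hx hy scaler0 addr0.
- by move=> n m phi x hx; rewrite nat_pi hx (lin0 (lin_Vact phi hV)).
- by [].
- by move=> n c x y -> ->; rewrite scaler0 addr0.
Qed.

Lemma closed_kerPp : closedQ (kerQ pp).
Proof.
split => /=.
- by move=> n; rewrite /pp val_0 (lin0 (lin_pi n)).
- by move=> n c x y hx hy; rewrite /pp in hx hy *; rewrite val_add val_scale (lin_pi n) hx hy scaler0 addr0.
- by move=> n m phi x hx; rewrite /pp in hx *; rewrite val_Pact nat_pi hx (lin0 (lin_Vact phi hV)).
- by [].
- by move=> n c x y -> ->; rewrite scaler0 addr0.
Qed.

Lemma vanish n (x : Vm (Siter a P) n) : num (H1D pi a) n x -> den (H1D pi a) n x.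
Proof.
move=> [hx1 hx2]; rewrite /=.
have M1 : mapsQ f (kerQ pi) (kerQ pp).
  split => m y /=; first by move=> hy; rewrite hfp.
  by move=> ->; rewrite (lin0 (lin_f m)).
have M2 : mapsQ gv (kerQ pp) (kerQ pi) by split => m y /=; [move=> h; exact: h|move=> ->].
have M3 : mapsQ hh0 (allQ P) (kerQ pi).
  split => m y /=; first by move=> _; rewrite /hh0 /gv (linB (lin_pi m)) -/(pp m (f m y)) hfp subrr.
  by move=> ->; rewrite /hh0 /gv (lin0 (lin_f m)) val_0 subrr.
have hvan := vanish_gen FImod_Pp closed_kerPp Kgen.
have e1 := (mapsQ_Diter a hfm M1).1 _ _ hx1.
have e2 := hvan a n _ (leqnn a) e1.
have e3 := (mapsQ_Diter a morph_gv M2).2 _ _ e2.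
have e4 := (mapsQ_Diter a morph_hh0 M3).2 _ _ hx2.
have := closedQ_Diter a hPm closed_kerP => [[_ _ _ _ dD]].
have := dD n 1 _ _ e3 e4; rewrite scale1r hS_decomp addrC subrK //.
Qed.

End WithF.

End Main.
Set Implicit Arguments.

Lemma vanish_cor (k : comPzRingType) (G : groupType) (V : preFI k G) (d : int)
  (P : preFI k G) (pi : forall n, Vm P n -> Vm V n) :
  FImod V -> gen_le V d -> projective P -> epi pi ->
  forall a : nat, deg (H1D pi a) <> ENInf -> (a%:Z <= d) \/ ele (EFin a%:Z) (hd1 pi).
Proof.
move=> hV hgen hP hpi a hne.
apply: NNPP => hc; apply: hne; apply: deg_empty.
have [f [hfm hfp]] := @lift_f _ _ _ _ _ _ hV hP hpi hgen.
apply: (@vanish _ _ _ _ _ _ hV hP hpi _ hfm hfp).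
- move=> m ham; have : ~ (a%:Z <= d) by move=> h; apply: hc; left.
  lia.
- move=> m y ham; apply: deg_small => hm; apply: hc; right.
  apply: ele_trans hm => /=; lia.
Qed.


Theorem mainTheorem11 (k : comPzRingType) (G : groupType) (V : preFI k G) (d : int)
  (P : preFI k G) (pi : forall n, Vm P n -> Vm V n) :
  FImod V -> presented_fin V -> gen_le V d ->
  projective P -> epi pi ->
  ele (eaddc (dreg pi) 1) (dwidth pi) /\
  ele (dwidth pi) (eadd (dreg pi) (emax (hd1 pi) (EFin d))).
Proof.
move=> hV _ hgen hP hpi.
have cor := vanish_cor hV hgen hP hpi.
have [sup1 sup2] := esup_lub (fun e => exists a : nat, (0 < a)%N /\ e = deg (H1D pi a)).
have [wup1 wup2] := esup_lub (fun e => exists a : nat, (0 < a)%N /\ e = eaddc (deg (H1D pi a)) a%:Z).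
rewrite /dreg /dwidth.
set s := esup _ in sup1 sup2 *.
set w := esup _ in wup1 wup2 *.
split.
- case Ew : w => [|w'|] //=.
  + have : ele s ENInf.
      apply: sup2 => x [a [ha ->]].
      have := wup1 _ (ex_intro _ a (conj ha erefl)); rewrite Ew.
      by case: (deg _).
    by case: (s).
  + have : ele s (EFin (w' - 1)).
      apply: sup2 => x [a [ha ->]].
      have := wup1 _ (ex_intro _ a (conj ha erefl)); rewrite Ew.
      case: (deg _) => //= t; lia.
    by case: (s) => //= s'; lia.
  + by case: (s).
- apply: wup2 => x [a [ha ->]].
  have ts : ele (deg (H1D pi a)) s by apply: sup1; exists a.
  move: ts; case Et : (deg (H1D pi a)) => [|t|] ts //=.
  + have [hd|hh] : (a%:Z <= d) \/ ele (EFin a%:Z) (hd1 pi) by apply: cor; rewrite Et.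
    * case: (s) ts => //= s' ts; case: (hd1 pi) => [|h|] //=.
        by lia.
      have : d <= Num.max h d by rewrite le_max lexx orbT.
      lia.
    * case: (s) ts => //= s' ts; case: (hd1 pi) hh => [|h|] //= hh.
      have : h <= Num.max h d by rewrite le_max lexx.
      lia.
  + by case: (s) ts.
Qed.
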